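(* Let $k \ge 1$. For every instance $(d,\mathcal{C},k)$ of $k$-center and every execution of the reverse greedy algorithm on it (with any tie-breaking), the returned set $F_{n-k}$ satisfies $\mathrm{cost}(F_{n-k}) \le 2k\cdot \mathrm{OPT}$. Conversely, for every $k$ there exists an instance of $k$-center and an execution of reverse greedy on it (for some valid choice of tie-breaking) whose returned solution has cost $(2k-2)\cdot\mathrm{OPT}$. That is, reverse greedy is between a $(2k-2)$-approximation and a $2k$-approximation for $k$-center.
   Context: An instance of $k$-center consists of a finite metric space $(d,\mathcal{C})$ with $|\mathcal{C}| = n$ and an integer $k\in\mathbb{N}$ with $k\le n$. Every point of $\mathcal{C}$ is both a client and a potential facility. For $c\in\mathcal{C}$ and nonempty $F\subseteq\mathcal{C}$, $d(c,F):=\min_{f\in F} d(c,f)$, and $\mathrm{cost}(F):=\max_{c\in\mathcal{C}} d(c,F)$. $\mathrm{OPT}$ is the minimum of $\mathrm{cost}(F)$ over all $F\subseteq\mathcal{C}$ with $|F|\le k$. The reverse greedy algorithm sets $F_0:=\mathcal{C}$ and, for $i=1,\dots,n-k$, chooses $f_i\in\arg\min_{f\in F_{i-1}}\mathrm{cost}(F_{i-1}\setminus\{f\})$ (ties broken arbitrarily) and sets $F_i:=F_{i-1}\setminus\{f_i\}$; it returns $F_{n-k}$. An execution is any run of this algorithm corresponding to some choice of tie-breaking. *)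

(* Defs.v *)
From HB Require Import structures.
From mathcomp Require Import all_boot all_order all_algebra.
Set Implicit Arguments. Unset Strict Implicit. Unset Printing Implicit Defensive.
Import Order.TTheory GRing.Theory Num.Theory.
Local Open Scope ring_scope.

Section KCenter.
Variables (R : realFieldType) (T : finType) (d : T -> T -> R).

Definition is_metric : Prop :=
  [/\ forall x y, 0 <= d x y,
      forall x y, (d x y == 0) = (x == y),
      forall x y, d x y = d y x &
      forall x y z, d x z <= d x y + d y z].

(* d(c, F) = min_{f in F} d(c, f), for F nonempty (0 by convention if F = set0). *)
Definition dist_to (c : T) (F : {set T}) : R :=
  match [pick f in F] with
  | Some f0 => \big[Num.min/d c f0]_(f in F) d c f
  | None => 0
  end.

(* cost(F) = max_{c} d(c, F) (distances are >= 0, so 0 is a neutral start). *)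
Definition cost (F : {set T}) : R := \big[Num.max/0]_(c : T) dist_to c F.

Definition is_OPT (k : nat) (opt : R) : Prop :=
  (exists2 F : {set T}, (F != set0) && (#|F| <= k)%N & cost F = opt) /\
  (forall F : {set T}, (F != set0) && (#|F| <= k)%N -> opt <= cost F).

Fixpoint rg_exec (F : {set T}) (s : seq T) : Prop :=
  match s with
  | [::] => True
  | f :: s' =>
      [/\ f \in F,
          forall g, g \in F -> cost (F :\ f) <= cost (F :\ g) &
          rg_exec (F :\ f) s']
  end.

Definition rg_out (F : {set T}) (s : seq T) : {set T} :=
  foldl (fun G f => G :\ f) F s.

End KCenter.

(* Main.v *)
Require Import Defs.
From HB Require Import structures.
From mathcomp Require Import all_boot all_order all_algebra.
From mathcomp Require Import reals.
From mathcomp Require Import zify ring lra.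
Import Order.TTheory GRing.Theory Num.Theory.
Local Open Scope ring_scope.
Set Implicit Arguments. Unset Strict Implicit. Unset Printing Implicit Defensive.
Section Basic.
Variables (R : realFieldType) (T : finType) (d : T -> T -> R).

Lemma dist_le u (F : {set T}) v : v \in F -> dist_to d u F <= d u v.
Proof.
move=> vF; rewrite /dist_to; case: pickP => [f0 Hf0|none]; last by rewrite none in vF.
exact: (bigmin_le_cond _ (P := fun f => f \in F)).
Qed.

Lemma dist_att u (F : {set T}) : F != set0 -> exists2 v, v \in F & dist_to d u F = d u v.
Proof.
move=> /set0Pn [w wF]; rewrite /dist_to; case: pickP => [f0 Hf0|none]; last by rewrite none in wF.
apply: (big_ind (fun m => exists2 v, v \in F & m = d u v)).
- by exists f0.
- move=> a b [va Ha ->] [vb Hb ->]; case: (leP (d u va) (d u vb)) => _; [by exists va | by exists vb].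
- by move=> i iF; exists i.
Qed.

Lemma dist_ge u (F : {set T}) c : F != set0 -> (forall v, v \in F -> c <= d u v) -> c <= dist_to d u F.
Proof. by move=> /(dist_att u) [v vF ->]; apply. Qed.

Lemma cost_ge0 (F : {set T}) : 0 <= cost d F.
Proof. exact: bigmax_ge_id. Qed.

Lemma cost_ge u F c : c <= dist_to d u F -> c <= cost d F.
Proof. by move=> h; apply: (bigmax_sup u) => //. Qed.

Lemma dist_cost u F : dist_to d u F <= cost d F.
Proof. exact: cost_ge. Qed.

Lemma cost_le F c : 0 <= c -> (forall u, dist_to d u F <= c) -> cost d F <= c.
Proof. by move=> c0 h; apply: bigmax_le. Qed.

Lemma cost_anti (G H : {set T}) : G \subset H -> G != set0 -> cost d H <= cost d G.
Proof.
move=> GH G0; apply: cost_le; first exact: cost_ge0.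
move=> u; have [v vG e] := @dist_att u G G0.
apply: le_trans (@dist_le u H v (subsetP GH v vG)) _; rewrite -e; exact: dist_cost.
Qed.

Lemma rg_outE (F : {set T}) s : rg_out F s = F :\: [set x in s].
Proof.
elim: s F => [|a s IH] F /=.
  by apply/setP=> x; rewrite !inE.
rewrite /rg_out /= -/(rg_out _ _) IH; apply/setP=> x; rewrite !inE.
by case: (x == a) => //=; rewrite andbC.
Qed.

End Basic.
Section Phase.
Variables (R : realFieldType) (T : finType) (d : T -> T -> R).

Lemma rg_cat (F : {set T}) s1 s2 : rg_exec d F s1 -> rg_exec d (rg_out F s1) s2 -> rg_exec d F (s1 ++ s2).
Proof.
elim: s1 F => [|f s1 IH] F //= [fF fmin ex] h2; split => //; exact: IH.
Qed.

Lemma rg_out_cat (F : {set T}) s1 s2 : rg_out F (s1 ++ s2) = rg_out (rg_out F s1) s2.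
Proof. by rewrite /rg_out foldl_cat. Qed.

Lemma phase (F0 Fend : {set T}) (c : R) : Fend \subset F0 -> Fend != set0 ->
  (forall g, g \in F0 -> c <= cost d (F0 :\ g)) -> cost d Fend <= c ->
  rg_exec d F0 (enum (F0 :\: Fend)) /\ rg_out F0 (enum (F0 :\: Fend)) = Fend.
Proof.
move=> sub ne LB UB.
have eqF : F0 :\: [set x in enum (F0 :\: Fend)] = Fend.
  apply/setP => x; rewrite !inE mem_enum !inE; case xE: (x \in Fend) => /=.
    by rewrite (subsetP sub x xE).
  by case: (x \in F0).
split; last by rewrite rg_outE.
have key : forall s (F : {set T}), uniq s -> {subset s <= F} -> F \subset F0 ->
    F :\: [set x in s] = Fend -> rg_exec d F s.
  elim=> [|f s IH] F //= /andP [fs us] sF FF0 eF.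
  have fF : f \in F by apply: sF; rewrite mem_head.
  have fE : f \notin Fend by rewrite -eF !inE eqxx.
  have EF : Fend \subset F by rewrite -eF; apply: subsetDl.
  split => //.
  - move=> g gF.
    have h1 : cost d (F :\ f) <= cost d Fend.
      apply: cost_anti => //; apply/subsetP => x xE.
      rewrite !inE (subsetP EF x xE) andbT; apply/eqP => exf; by rewrite -exf xE in fE.
    apply: le_trans h1 _; apply: le_trans UB _; apply: le_trans (LB g (subsetP FF0 g gF)) _.
    apply: cost_anti; first by apply: setSD.
    apply/set0Pn; case: (eqVneq g f) => [egf|ngf].
      have [y yE] := set0Pn _ ne; exists y; rewrite !inE (subsetP EF y yE) andbT.
      by apply/eqP => eyg; move: fE; rewrite -egf -eyg yE.
    by exists f; rewrite !inE fF andbT eq_sym.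
  - apply: IH => //.
    + move=> x xs; rewrite !inE sF ?inE ?xs ?orbT // andbT.
      by apply/eqP => exf; move: xs; rewrite exf (negbTE fs).
    + by apply: subset_trans FF0; apply: subsetDl.
    + rewrite -eF; apply/setP => x; rewrite !inE; case: (x == f); by rewrite ?andbF.
apply: key.
- exact: enum_uniq.
- by move=> x; rewrite mem_enum !inE => /andP [].
- exact: subxx.
- exact: eqF.
Qed.

End Phase.
Section Upper.
Variables (R : realFieldType) (T : finType) (d : T -> T -> R).
Hypothesis dm : is_metric d.
Variables (k : nat) (O : {set T}) (r : R).
Hypothesis O0 : O != set0.
Hypothesis Ok : (#|O| <= k)%N.
Hypothesis Or : cost d O = r.

Lemma d_ge0 x y : 0 <= d x y. Proof. by case: dm. Qed.
Lemma d_sym x y : d x y = d y x. Proof. by case: dm. Qed.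
Lemma d_tri x y z : d x z <= d x y + d y z. Proof. by case: dm. Qed.
Lemma d_xx x : d x x = 0. Proof. by case: dm => _ h _ _; apply/eqP; rewrite h. Qed.

Lemma r_ge0 : 0 <= r. Proof. rewrite -Or; exact: cost_ge0. Qed.

Definition sg (u : T) : T := odflt u [pick o in O | d u o <= r].

Lemma sgP u : sg u \in O /\ d u (sg u) <= r.
Proof.
rewrite /sg; case: pickP => [o /andP[oO h]|none] //=.
have [v vO e] := dist_att d u O0.
have := none v; rewrite vO /= -e -Or dist_cost //.
Qed.

Lemma sg_close x y : sg x = sg y -> d x y <= r + r.
Proof.
move=> e; apply: le_trans (d_tri x (sg x) y) _; apply: lerD; first by case: (sgP x).
by rewrite e d_sym; case: (sgP y).
Qed.

Definition Inv (F : {set T}) := forall c, exists x, sg x \in sg @: F /\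
  d c x <= (2 * (k - #|sg @: F|))%:R * r.

Lemma card_sgF (F : {set T}) : (#|sg @: F| <= k)%N.
Proof.
apply: leq_trans Ok; apply: subset_leq_card; apply/subsetP=> y /imsetP [x _ ->].
by case: (sgP x).
Qed.

Lemma collide (F : {set T}) : (k < #|F|)%N -> exists f, exists f', [/\ f \in F, f' \in F, f != f' & sg f = sg f'].
Proof.
move=> kF.
case: (boolP [exists f in F, exists f' in F, (f != f') && (sg f == sg f')]).
  move/existsP => [f /andP [fF /existsP [f' /andP[f'F /andP [ne /eqP e]]]]].
  by exists f, f'.
move/existsPn => H.
have inj : {in F &, injective sg}.
  move=> x y xF yF e; apply/eqP; apply: contraT => ne.
  have := H x; rewrite xF /= => /existsPn /(_ y); rewrite yF ne e eqxx //.
have := card_in_imset inj; have := card_sgF F => h1 h2; rewrite h2 in h1.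
by rewrite ltnNge h1 in kF.
Qed.

Lemma Inv_step (F : {set T}) g : (k < #|F|)%N -> Inv F -> g \in F ->
  (forall h, h \in F -> cost d (F :\ g) <= cost d (F :\ h)) -> Inv (F :\ g).
Proof.
move=> kF IF gF gmin.
set A := (2 * (k - #|sg @: F|))%:R * r.
have A0 : 0 <= A by rewrite /A mulr_ge0 // r_ge0.
have [f [f' [fF f'F ne e]]] := collide kF.
have sgfe : sg @: (F :\ f) = sg @: F.
  apply/eqP; rewrite eqEsubset; apply/andP; split; first by apply: imsetS; apply: subsetDl.
  apply/subsetP=> y /imsetP [x xF ->]; apply/imsetP.
  case: (eqVneq x f) => [->|nx]; first by exists f'; rewrite // !inE f'F eq_sym ne.
  by exists x; rewrite // !inE nx.
have cf : cost d (F :\ f) <= A + (r + r).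
  apply: cost_le; first by rewrite addr_ge0 // addr_ge0 // r_ge0.
  move=> c; have [x [hx dx]] := IF c.
  rewrite -sgfe in hx; case/imsetP: hx => y yF ey.
  apply: le_trans (dist_le d c yF) _.
  apply: le_trans (d_tri c x y) _; apply: lerD => //; exact: sg_close.
have cg : cost d (F :\ g) <= A + (r + r) := le_trans (gmin f fF) cf.
have Fg0 : F :\ g != set0.
  apply/set0Pn; case: (eqVneq f g) => [efg|nfg].
    by exists f'; rewrite !inE f'F andbT -efg eq_sym.
  by exists f; rewrite !inE fF andbT nfg.
have sub : sg @: (F :\ g) \subset sg @: F by apply: imsetS; apply: subsetDl.
have cardlb : (#|sg @: F| <= (#|sg @: (F :\ g)|).+1)%N.
  have : sg @: F \subset sg g |: sg @: (F :\ g).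
    apply/subsetP => y /imsetP [x xF ->]; rewrite !inE.
    case: (eqVneq x g) => [->|nx]; first by rewrite eqxx.
    by apply/orP; right; apply/imsetP; exists x; rewrite // !inE nx.
  move/subset_leq_card; rewrite cardsU1; case: (_ \notin _) => //= h.
  by apply: leq_trans h _.
have ck := card_sgF F.
case: (eqVneq #|sg @: (F :\ g)| #|sg @: F|) => [ceq|cne].
  have eqs : sg @: (F :\ g) = sg @: F.
    by apply/eqP; rewrite eqEcard sub ceq leqnn.
  by move=> c; rewrite eqs; apply: IF.
have clt : #|sg @: (F :\ g)| = (#|sg @: F|).-1.
  have := subset_leq_card sub; move: cne cardlb; lia.
move=> c; have [x xFg ex] := dist_att d c Fg0.
exists x; split; first by apply/imsetP; exists x.
rewrite -ex; apply: le_trans (dist_cost d c _) _; apply: le_trans cg _.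
have hpos : (0 < #|sg @: F|)%N.
  rewrite card_gt0; apply/set0Pn; exists (sg g); apply/imsetP; by exists g.
have -> : A + (r + r) = (2 * (k - #|sg @: F|) + 2)%:R * r.
  by rewrite /A natrD mulrDl; congr (_ + _); rewrite mulr_natl mulr2n.
rewrite clt; apply: ler_wpM2r; first exact: r_ge0.
by rewrite ler_nat; lia.
Qed.

End Upper.
Lemma card_run (R : realFieldType) (T : finType) (d : T -> T -> R) s (F : {set T}) :
  rg_exec d F s -> #|rg_out F s| = (#|F| - size s)%N.
Proof.
elim: s F => [|f s IH] F /=; first by rewrite subn0.
case=> fF _ ex; rewrite /rg_out /= -/(rg_out _ _) IH // (cardsD1 f F) fF /=.
lia.
Qed.

Section Upper2.
Variables (R : realFieldType) (T : finType) (d : T -> T -> R).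
Hypothesis dm : is_metric d.
Variables (k : nat) (O : {set T}) (r : R).
Hypothesis O0 : O != set0.
Hypothesis Ok : (#|O| <= k)%N.
Hypothesis Or : cost d O = r.

Lemma Inv_run s (F : {set T}) : rg_exec d F s -> (size s + k <= #|F|)%N ->
  Inv d k O r F -> Inv d k O r (rg_out F s).
Proof.
elim: s F => [|f s IH] F /=; first done.
case=> fF fmin ex hs IF; rewrite /rg_out /= -/(rg_out _ _).
have hc := cardsD1 f F; rewrite fF /= in hc.
apply: IH => //; first by move: hs; rewrite hc; lia.
apply: Inv_step => //; move: hs; rewrite hc; lia.
Qed.

Lemma Inv_T : Inv d k O r [set: T].
Proof.
move=> c; exists c; split; first by apply/imsetP; exists c.
rewrite d_xx //; apply: mulr_ge0 => //; exact: r_ge0 Or.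
Qed.

Lemma final_bound (F : {set T}) : Inv d k O r F -> F != set0 -> cost d F <= (2 * k)%:R * r.
Proof.
move=> IF F0; have r0 : 0 <= r by exact: r_ge0 Or.
apply: cost_le; first by apply: mulr_ge0.
move=> c; have [x [/imsetP [y yF ey] dx]] := IF c.
apply: le_trans (dist_le d c yF) _; apply: le_trans (d_tri dm c x y) _.
have hxy : d x y <= r + r by apply: (sg_close dm O0 Or).
have hpos : (0 < #|sg d O r @: F|)%N.
  rewrite card_gt0; apply/set0Pn; have [z zF] := set0Pn _ F0; exists (sg d O r z); apply/imsetP; by exists z.
have hk : (#|sg d O r @: F| <= k)%N by apply: card_sgF.
apply: le_trans (lerD dx hxy) _.
have -> : (2 * (k - #|sg d O r @: F|))%:R * r + (r + r) = (2 * (k - #|sg d O r @: F|) + 2)%:R * r.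
  by rewrite natrD mulrDl; congr (_ + _); rewrite mulr_natl mulr2n.
apply: ler_wpM2r => //; rewrite ler_nat; lia.
Qed.

End Upper2.

Lemma part1 (R : realFieldType) :
  (forall (T : finType) (d : T -> T -> R) (k : nat),
      is_metric d -> (1 <= k)%N -> (k <= #|T|)%N ->
      forall s : seq T,
        rg_exec d [set: T] s -> size s = (#|T| - k)%N ->
        forall opt : R, is_OPT d k opt ->
          cost d (rg_out [set: T] s) <= (2 * k)%:R * opt).
Proof.
move=> T d k dm k1 kT s ex hs opt [[O /andP [O0 Ok] Oc] _].
apply: (final_bound dm O0 Ok Oc).
  apply: (Inv_run dm O0 Ok Oc ex); first by rewrite hs cardsT; lia.
  by apply: Inv_T.
have := card_run ex; rewrite hs cardsT => hc.
by rewrite -card_gt0 hc; lia.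
Qed.
Notation pt L := (bool * 'I_L.+1 * 'I_(2 * L + 2).+1)%type.
Definition okp L (p : pt L) : bool :=
  if p.1.1 then nat_of_ord p.2 == 0%N else (nat_of_ord p.1.2 <= p.2)%N.
Definition TT (L : nat) : finType := {p : pt L | okp p}.
Definition x0 L : TT L := exist (@okp L) (true, ord0, ord0) isT.

Definition absd (a b : nat) : nat := (a - b) + (b - a).

Definition potn (t : bool) (j s : nat) (c : bool) (jj ss : nat) : nat :=
  if ~~ t then
    if c then (if jj == j then 2 * j + 1 else if jj == 0 then 1 else 0)
    else if jj == j then (if ss == s then 2 * j + 2 else 2 * j)
    else if jj == 0 then (if ss == s then 2 else if ss.+1 == j then 1 else 0)
    else 0
  else
    if c then (if jj == j then 2 * j + 1 else if jj == 0 then 1 else 0)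
    else if jj == j then 2 * j
    else if (jj == 0) && (ss.+1 == j) then 1 else 0.

Ltac potcrush := rewrite /absd /potn /=; repeat (case: ifP => ?; simpl); lia.

Lemma lipE1 t j s jj ss : (absd (potn t j s true jj 0) (potn t j s false jj ss) <= 1)%N.
Proof. case: t; potcrush. Qed.
Lemma lipE2 t j s jj ss : (absd (potn t j s false jj ss) (potn t j s false 0 ss) <= 2 * jj)%N.
Proof. case: t; potcrush. Qed.
Lemma lipE3 t j s l : (1 <= l)%N -> (absd (potn t j s true l 0) (potn t j s false 0 l.-1) <= 2 * l)%N.
Proof. case: t; potcrush. Qed.
Section Inst.
Variable L : nat.
Local Notation T := (TT L).

Definition isC (x : T) : bool := (val x).1.1.
Definition lv (x : T) : nat := (val x).1.2.
Definition ch (x : T) : nat := (val x).2.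

Lemma lv_le (x : T) : (lv x <= L)%N.
Proof. by rewrite /lv -ltnS ltn_ord. Qed.
Lemma ch_le (x : T) : (ch x <= 2 * L + 2)%N.
Proof. by rewrite /ch -ltnS ltn_ord. Qed.
Lemma okC (x : T) : isC x -> ch x = 0%N.
Proof. by case: x => [[[c j] s] h]; rewrite /isC /ch /okp /= in h * => hc; rewrite hc in h; apply/eqP. Qed.
Lemma okP (x : T) : ~~ isC x -> (lv x <= ch x)%N.
Proof. by case: x => [[[c j] s] h]; rewrite /isC /ch /lv /okp /= in h * => hc; rewrite (negbTE hc) in h. Qed.

Lemma ptE (x y : T) : isC x = isC y -> lv x = lv y -> ch x = ch y -> x = y.
Proof.
case: x => [[[c1 j1] s1] h1]; case: y => [[[c2 j2] s2] h2]; rewrite /isC /lv /ch /= => e1 e2 e3.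
apply: val_inj => /=; rewrite e1; congr (_, _, _); exact: ord_inj.
Qed.

Definition mk (c : bool) (j s : nat) : T := insubd (x0 L) (c, inord j, inord s).

Lemma mkE c j s : (j <= L)%N -> (s <= 2 * L + 2)%N -> (if c then s == 0%N else (j <= s)%N) ->
  [/\ isC (mk c j s) = c, lv (mk c j s) = j & ch (mk c j s) = s].
Proof.
move=> hj hs hc; rewrite /isC /lv /ch /mk val_insubd /okp /= !inordK // hc /= !inordK //.
Qed.

Definition pot (i : pt L) (x : T) : nat := potn i.1.1 i.1.2 i.2 (isC x) (lv x) (ch x).
Definition dn (x y : T) : nat := (\max_(i : pt L) absd (pot i x) (pot i y))%N.

Lemma dn_ge t j s x y : (j <= L)%N -> (s <= 2 * L + 2)%N ->
  (absd (potn t j s (isC x) (lv x) (ch x)) (potn t j s (isC y) (lv y) (ch y)) <= dn x y)%N.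
Proof.
move=> hj hs; have := @leq_bigmax _ (fun i : pt L => absd (pot i x) (pot i y)) (t, inord j, inord s).
by rewrite /pot /= !inordK.
Qed.

Lemma dn_le x y c : (forall i : pt L, absd (pot i x) (pot i y) <= c)%N -> (dn x y <= c)%N.
Proof. by move=> h; apply/bigmax_leqP => i _; apply: h. Qed.

Lemma dn_sym x y : dn x y = dn y x.
Proof. by apply: eq_bigr => i _; rewrite /absd addnC. Qed.

Lemma dn_xx x : dn x x = 0%N.
Proof. by apply/eqP; rewrite -leqn0; apply: dn_le => i; rewrite /absd subnn. Qed.

Lemma dn_tri x y z : (dn x z <= dn x y + dn y z)%N.
Proof.
apply: dn_le => i.
have h1 : (absd (pot i x) (pot i y) <= dn x y)%N by exact: (@leq_bigmax _ (fun i => absd (pot i x) (pot i y)) i).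
have h2 : (absd (pot i y) (pot i z) <= dn y z)%N by exact: (@leq_bigmax _ (fun i => absd (pot i y) (pot i z)) i).
move: h1 h2; rewrite /absd; lia.
Qed.

Lemma dn_CP x y : isC x -> ~~ isC y -> lv x = lv y -> (dn x y <= 1)%N.
Proof.
move=> hx hy e; apply: dn_le => i; rewrite /pot hx (negbTE hy) e (okC hx); exact: lipE1.
Qed.

Lemma dn_Pb x y : ~~ isC x -> ~~ isC y -> lv y = 0%N -> ch x = ch y -> (dn x y <= 2 * lv x)%N.
Proof.
move=> hx hy e1 e2; apply: dn_le => i; rewrite /pot (negbTE hx) (negbTE hy) e1 e2; exact: lipE2.
Qed.

Lemma dn_Cb x y : isC x -> (1 <= lv x)%N -> ~~ isC y -> lv y = 0%N -> (ch y).+1 = lv x ->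
  (dn x y <= 2 * lv x)%N.
Proof.
move=> hx h1 hy e1 e2; apply: dn_le => i; rewrite /pot hx (negbTE hy) e1 (okC hx).
have -> : ch y = (lv x).-1 by rewrite -e2.
exact: lipE3.
Qed.

Definition Cp j := mk true j 0.
Definition Pp j s := mk false j s.

Lemma CpE j : (j <= L)%N -> [/\ isC (Cp j) = true, lv (Cp j) = j & ch (Cp j) = 0%N].
Proof. by move=> hj; apply: mkE => //; lia. Qed.
Lemma PpE j s : (j <= L)%N -> (s <= 2 * L + 2)%N -> (j <= s)%N ->
  [/\ isC (Pp j s) = false, lv (Pp j s) = j & ch (Pp j s) = s].
Proof. by move=> hj hs hjs; apply: mkE. Qed.

Lemma dn_PP x y : ~~ isC x -> ~~ isC y -> lv x = lv y -> (dn x y <= 2)%N.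
Proof.
move=> hx hy e; have [c1 c2 c3] := CpE (lv_le x).
apply: leq_trans (dn_tri x (Cp (lv x)) y) _.
have h1 : (dn x (Cp (lv x)) <= 1)%N by rewrite dn_sym; apply: dn_CP; rewrite ?c1 ?c2.
have h2 : (dn (Cp (lv x)) y <= 1)%N by apply: dn_CP; rewrite ?c1 ?c2.
lia.
Qed.

Lemma dn_Pbt x t : ~~ isC x -> (lv x <= t)%N -> (t <= 2 * L + 2)%N ->
  (dn x (Pp 0 t) <= 2 * lv x + 2)%N.
Proof.
move=> hx h1 h2; have [c1 c2 c3] := PpE (lv_le x) h2 h1.
have [d1 d2 d3] := PpE (leq0n L) h2 (leq0n t).
apply: leq_trans (dn_tri x (Pp (lv x) t) _) _.
have e1 : (dn x (Pp (lv x) t) <= 2)%N by apply: dn_PP; rewrite ?c1 ?c2.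
have e2 : (dn (Pp (lv x) t) (Pp 0 t) <= 2 * lv x)%N.
  by rewrite -{2}c2; apply: dn_Pb; rewrite ?c1 ?d1 ?d2 ?c3 ?d3.
lia.
Qed.

Lemma dn_Cbt x t : isC x -> (lv x <= t)%N -> (t <= 2 * L + 2)%N ->
  (dn x (Pp 0 t) <= 2 * lv x + 1)%N.
Proof.
move=> hx h1 h2; have [c1 c2 c3] := PpE (lv_le x) h2 h1.
have [d1 d2 d3] := PpE (leq0n L) h2 (leq0n t).
apply: leq_trans (dn_tri x (Pp (lv x) t) _) _.
have e1 : (dn x (Pp (lv x) t) <= 1)%N by apply: dn_CP; rewrite ?c1 ?c2.
have e2 : (dn (Pp (lv x) t) (Pp 0 t) <= 2 * lv x)%N.
  by rewrite -{2}c2; apply: dn_Pb; rewrite ?c1 ?d1 ?d2 ?c3 ?d3.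
lia.
Qed.

Lemma sep1 x y : x <> y -> (1 <= dn x y)%N.
Proof.
move=> ne.
have hne : (isC x != isC y) || (lv x != lv y) || (ch x != ch y).
  apply: contraT; rewrite !negb_or !negbK => /andP [/andP [/eqP e1 /eqP e2] /eqP e3]; by case: (ne (ptE e1 e2 e3)).
apply: leq_trans _ (dn_ge (isC x) x y (lv_le x) (ch_le x)).
case hx: (isC x); case hy: (isC y); rewrite ?hx ?hy /= in hne *.
- have := okC hx; have := okC hy; potcrush.
- have := okC hx; potcrush.
- have := okC hy; potcrush.
- have := okP (negbT hx); have := okP (negbT hy); potcrush.
Qed.

Lemma sep2 x y : ~~ isC x -> ~~ isC y -> x <> y -> (2 <= dn x y)%N.
Proof.
move=> hx hy ne.
have hne : (lv x != lv y) || (ch x != ch y).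
  apply: contraT; rewrite !negb_or !negbK => /andP [/eqP e2 /eqP e3].
  by case: ne; apply: ptE => //; rewrite (negbTE hx) (negbTE hy).
apply: leq_trans _ (dn_ge false x y (lv_le x) (ch_le x)).
rewrite (negbTE hx) (negbTE hy); potcrush.
Qed.

Definition S1 : {set T} := [set x | ~~ isC x].
Definition Q (a b : nat) : {set T} :=
  [set x | ~~ isC x && (((lv x == 0%N) && (a <= ch x)%N) || ((b <= lv x)%N && (1 <= lv x)%N && (ch x == L)))].

Lemma LB_C l v : (1 <= l)%N -> (l <= L)%N -> ~~ isC v -> lv v != l ->
  (2 * l + ~~ ((lv v == 0%N) && ((ch v).+1 == l)) <= dn (Cp l) v)%N.
Proof.
move=> h1 h2 hv hl; have [c1 c2 c3] := CpE h2.
apply: leq_trans _ (dn_ge true (Cp l) v h2 (leq0n (2 * L + 2))).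
rewrite c1 c2 c3 (negbTE hv); move: hl; potcrush.
Qed.

Lemma LB_P j s v : (j <= L)%N -> (j <= s)%N -> (s <= 2 * L + 2)%N -> ~~ isC v ->
  (lv v != j) || (j == 0%N) -> ~~ ((lv v == 0%N) && (ch v == s)) ->
  (2 * j + 1 + ~~ ((lv v == 0%N) && ((ch v).+1 == j)) <= dn (Pp j s) v)%N.
Proof.
move=> h1 h2 h3 hv hl hs; have [c1 c2 c3] := PpE h1 h3 h2.
apply: leq_trans _ (dn_ge false (Pp j s) v h1 h3).
rewrite c1 c2 c3 (negbTE hv); move: hl hs; potcrush.
Qed.

Lemma ne_pt x y : ~~ isC x -> ~~ isC y -> x <> y -> (lv x != lv y) || (ch x != ch y).
Proof.
move=> hx hy ne; apply: contraT; rewrite !negb_or !negbK => /andP [/eqP e2 /eqP e3].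
by case: ne; apply: ptE => //; rewrite (negbTE hx) (negbTE hy).
Qed.

Definition cb a := if (a < L)%N then (2 * a + 3)%N else (2 * a + 2)%N.

Lemma LB_bphase a g : (a <= L)%N -> g \in Q a (a + 2) ->
  exists u, forall v, v \in Q a (a + 2) -> v <> g -> (cb a <= dn u v)%N.
Proof.
move=> ha; rewrite inE => /andP [hg /orP [/andP [/eqP g0 ga] | /andP [/andP [g1 g2] /eqP gL]]].
- case: (eqVneq (ch g) a) => [gch|gne].
  + case: (ltnP a L) => aL.
    * exists (Cp a.+1) => v; rewrite inE => /andP [hv hv2] ne.
      have := ne_pt hv hg ne; have := lv_le v.
      have := LB_C (ltn0Sn a) aL hv; rewrite /cb aL.
      move: hv2; rewrite g0 gch; lia.
    * have aLe : a = L by apply/eqP; rewrite eqn_leq ha aL.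
      exists (Pp L L) => v; rewrite inE => /andP [hv hv2] ne.
      have := ne_pt hv hg ne; have := lv_le v.
      have hL2 : (L <= 2 * L + 2)%N by lia.
      have := LB_P (leqnn L) (leqnn L) hL2 hv.
      rewrite /cb; case: ifP => hif; move: hv2; rewrite g0 gch; lia.
  + set js := if (a < L)%N then a.+1 else L.
    have hjs : (js <= L)%N by rewrite /js; case: ifP.
    have hjc : (js <= ch g)%N by rewrite /js; case: ifP => hif2; lia.
    exists (Pp js (ch g)) => v; rewrite inE => /andP [hv hv2] ne.
    have := ne_pt hv hg ne; have := lv_le v.
    have := LB_P hjs hjc (ch_le g) hv.
    rewrite /cb /js; move: hv2 gne; rewrite g0; case: ifP => aL; lia.
- exists (Cp (lv g)) => v; rewrite inE => /andP [hv hv2] ne.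
  have := ne_pt hv hg ne; have := lv_le v.
  have := LB_C g2 (lv_le g) hv.
  rewrite /cb; move: hv2; rewrite gL; case: ifP => hif; lia.
Qed.

Lemma LB_sphase a g : (a + 2 <= L)%N -> g \in Q a.+1 (a + 2) ->
  exists u, forall v, v \in Q a.+1 (a + 2) -> v <> g -> (2 * a + 4 <= dn u v)%N.
Proof.
move=> ha; rewrite inE => /andP [hg /orP [/andP [/eqP g0 ga] | /andP [/andP [g1 g2] /eqP gL]]].
- have hj : (a.+1 <= L)%N by lia.
  exists (Pp a.+1 (ch g)) => v; rewrite inE => /andP [hv hv2] ne.
  have := ne_pt hv hg ne; have := lv_le v.
  have := LB_P hj ga (ch_le g) hv.
  move: hv2; rewrite g0; lia.
- exists (Cp (lv g)) => v; rewrite inE => /andP [hv hv2] ne.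
  have := ne_pt hv hg ne; have := lv_le v.
  have := LB_C g2 (lv_le g) hv.
  move: hv2; rewrite gL; lia.
Qed.

Lemma UB_Q p q c : (p <= 2 * L + 2)%N -> (1 <= q)%N -> (2 <= c)%N ->
  (forall j, (1 <= j)%N -> (j <= L)%N -> (j < q)%N -> (2 * j <= c)%N) ->
  (forall j, (1 <= j)%N -> (j < q)%N -> (j < p)%N -> (2 * j + 2 <= c)%N) ->
  (forall j, (1 <= j)%N -> (j <= L)%N -> (j < q)%N -> ((j == p.+1) && (2 * j <= c)%N) || (2 * j + 1 <= c)%N) ->
  forall u, exists2 v, v \in Q p q & (dn u v <= c)%N.
Proof.
move=> hp hq hc H1 H2 H3 u.
have hM : (2 * L + 2 <= 2 * L + 2)%N by [].
have [b1 b2 b3] := PpE (leq0n L) hM (leq0n _).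
have BQ : Pp 0 (2 * L + 2) \in Q p q by rewrite inE b1 b2 b3 /= hp.
case hu: (isC u).
- case: (ltnP (lv u) q) => hlq.
  + case: (posnP (lv u)) => h0.
    * exists (Pp 0 (2 * L + 2)) => //; apply: leq_trans (dn_Cbt hu _ hM) _; lia.
    * have := H3 _ h0 (lv_le u) hlq; case/orP => [/andP [/eqP e hc'] | hc'].
      - have hp2 : (p <= 2 * L + 2)%N by have := lv_le u; lia.
        have [e1 e2 e3] := PpE (leq0n L) hp2 (leq0n p).
        exists (Pp 0 p); first by rewrite inE e1 e2 e3 /= leqnn.
        apply: leq_trans (dn_Cb hu h0 _ e2 _) hc'; by rewrite ?e1 ?e3.
      - exists (Pp 0 (2 * L + 2)) => //; apply: leq_trans (dn_Cbt hu _ hM) hc'.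
        have := lv_le u; lia.
  + have h1 : (1 <= lv u)%N by lia.
    have hL : (L <= 2 * L + 2)%N by lia.
    have [e1 e2 e3] := PpE (lv_le u) hL (lv_le u).
    exists (Pp (lv u) L); first by rewrite inE e1 e2 e3 /= hlq h1 eqxx ?orbT.
    have hd : (dn u (Pp (lv u) L) <= 1)%N by apply: dn_CP; rewrite ?e1 ?e2.
    lia.
- have hu' : ~~ isC u by rewrite hu.
  case: (ltnP (lv u) q) => hlq.
  + case: (leqP p (ch u)) => hpc.
    * case: (posnP (lv u)) => h0.
      - exists u; first by rewrite inE hu' h0 hpc.
        by rewrite dn_xx.
      - have [e1 e2 e3] := PpE (leq0n L) (ch_le u) (leq0n (ch u)).
        exists (Pp 0 (ch u)); first by rewrite inE e1 e2 e3 /= hpc.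
        apply: leq_trans (dn_Pb hu' _ e2 _) _; rewrite ?e1 ?e3 //.
        exact: H1 h0 (lv_le u) hlq.
    * exists (Pp 0 (2 * L + 2)) => //; apply: leq_trans (dn_Pbt hu' _ hM) _.
        have := lv_le u; lia.
      case: (posnP (lv u)) => h0; first by rewrite h0.
      have := okP hu'; have := H2 _ h0 hlq; lia.
  + have h1 : (1 <= lv u)%N by lia.
    have hL : (L <= 2 * L + 2)%N by lia.
    have [e1 e2 e3] := PpE (lv_le u) hL (lv_le u).
    exists (Pp (lv u) L); first by rewrite inE e1 e2 e3 /= hlq h1 eqxx ?orbT.
    have hd : (dn u (Pp (lv u) L) <= 2)%N by apply: dn_PP; rewrite ?e1 ?e2.
    lia.
Qed.

Lemma UB_S1 u : exists2 v, v \in S1 & (dn u v <= 1)%N.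
Proof.
have hM : (2 * L + 2 <= 2 * L + 2)%N by [].
case hu: (isC u).
- have hl : (lv u <= 2 * L + 2)%N by have := lv_le u; lia.
  have [e1 e2 e3] := PpE (lv_le u) hM hl.
  exists (Pp (lv u) (2 * L + 2)); first by rewrite inE e1.
  by apply: dn_CP; rewrite ?e1 ?e2.
- by exists u; rewrite ?inE ?hu ?dn_xx.
Qed.

End Inst.
Section Real.
Variables (R : realFieldType) (L : nat).
Local Notation T := (TT L).
Definition dR (x y : T) : R := (dn x y)%:R.

Lemma dR_metric : is_metric dR.
Proof.
split.
- by move=> x y; rewrite /dR ler0n.
- move=> x y; rewrite /dR pnatr_eq0; case: (eqVneq x y) => [->|ne]; first by rewrite dn_xx eqxx.
  have hne : x <> y by apply/eqP.
  by have := sep1 hne; case: (dn x y).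
- by move=> x y; rewrite /dR dn_sym.
- by move=> x y z; rewrite /dR -natrD ler_nat dn_tri.
Qed.

Lemma costUB (F : {set T}) (c : nat) : (forall u, exists2 v, v \in F & (dn u v <= c)%N) -> cost dR F <= c%:R.
Proof.
move=> h; apply: cost_le; first exact: ler0n.
move=> u; have [v vF hv] := h u; apply: le_trans (dist_le dR u vF) _; by rewrite /dR ler_nat.
Qed.

Lemma costLB (F : {set T}) u (c : nat) : F != set0 -> (forall v, v \in F -> (c <= dn u v)%N) -> c%:R <= cost dR F.
Proof.
move=> F0 h; apply: (@cost_ge _ _ dR u); apply: dist_ge => // v vF; rewrite /dR ler_nat; exact: h.
Qed.

Let M := (2 * L + 2)%N.
Lemma hM : (M <= 2 * L + 2)%N. Proof. by []. Qed.
Lemma hM1 : (M.-1 <= 2 * L + 2)%N. Proof. rewrite /M; lia. Qed.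

Lemma bQ p q : (p <= M.-1)%N -> Pp L 0 M \in Q L p q /\ Pp L 0 M.-1 \in Q L p q.
Proof.
move=> hp; have [b1 b2 b3] := PpE (leq0n L) hM (leq0n M).
have [c1 c2 c3] := PpE (leq0n L) hM1 (leq0n M.-1).
rewrite !inE b1 b2 b3 c1 c2 c3 /= hp; split => //; move: hp; rewrite /M; lia.
Qed.

Lemma Qdel_ne p q g : (p <= M.-1)%N -> Q L p q :\ g != set0.
Proof.
move=> hp; have [h1 h2] := bQ q hp; apply/set0Pn.
case: (eqVneq g (Pp L 0 M)) => [e|ne].
  exists (Pp L 0 M.-1); rewrite in_setD1 h2 andbT e; apply/negP => /eqP.
  move/(congr1 (@ch L)); have [_ _ ->] := PpE (leq0n L) hM (leq0n M).
  have [_ _ ->] := PpE (leq0n L) hM1 (leq0n M.-1); rewrite /M; lia.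
by exists (Pp L 0 M); rewrite in_setD1 h1 andbT eq_sym.
Qed.

Lemma LBphase (F0 : {set T}) (c : nat) : (forall g, g \in F0 -> F0 :\ g != set0) ->
  (forall g, g \in F0 -> exists u, forall v, v \in F0 -> v <> g -> (c <= dn u v)%N) ->
  forall g, g \in F0 -> c%:R <= cost dR (F0 :\ g).
Proof.
move=> ne h g gF; have [u hu] := h g gF; apply: (costLB (u := u) (ne g gF)) => v; rewrite !inE => /andP [vg vF].
by apply: hu => // e; rewrite e eqxx in vg.
Qed.

Fixpoint tl (n a : nat) : seq T :=
  match n with
  | 0 => [::]
  | n'.+1 => enum (Q L a (a + 2) :\: Q L a.+1 (a + 2)) ++
             enum (Q L a.+1 (a + 2) :\: Q L a.+1 (a.+1 + 2)) ++ tl n' a.+1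
  end.

Lemma Qeq p b b' : (L < b)%N -> (L < b')%N -> Q L p b = Q L p b'.
Proof.
move=> h1 h2; apply/setP => x; rewrite !inE; have := lv_le x.
case: (isC x) => //=; case: (lv x == 0%N) => /=; case: (p <= ch x)%N => /=; case: (ch x == L) => /=; lia.
Qed.

Lemma Qsub p p' q q' : (p <= p')%N -> (q <= q')%N -> Q L p' q' \subset Q L p q.
Proof.
move=> h1 h2; apply/subsetP => x; rewrite !inE => /andP [-> /orP [/andP [-> h]| /andP [/andP [h3 h4] h5]]] /=.
  by rewrite (leq_trans h1 h).
by rewrite (leq_trans h2 h3) h4 h5 orbT.
Qed.

Lemma tl_ok n a : (a + n = L + 1)%N ->
  rg_exec dR (Q L a (a + 2)) (tl n a) /\ rg_out (Q L a (a + 2)) (tl n a) = Q L (L + 1) (L + 3).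
Proof.
elim: n a => [|n IH] a ha /=.
  have ea : a = (L + 1)%N by lia.
  by subst a; split => //; rewrite /rg_out /= -addnA.
have aL : (a <= L)%N by lia.
have hp1 : (a.+1 <= M.-1)%N by rewrite /M; lia.
have [E1 O1] : rg_exec dR (Q L a (a + 2)) (enum (Q L a (a + 2) :\: Q L a.+1 (a + 2))) /\
    rg_out (Q L a (a + 2)) (enum (Q L a (a + 2) :\: Q L a.+1 (a + 2))) = Q L a.+1 (a + 2).
  apply: (phase (c := (cb L a)%:R)).
  - by apply: Qsub.
  - by apply/set0Pn; exists (Pp L 0 M); case: (bQ (a + 2) hp1).
  - apply: LBphase; first by move=> g _; apply: Qdel_ne; lia.
    by move=> g gF; apply: LB_bphase.
  - by apply: costUB; apply: UB_Q; intros; rewrite ?/cb; try (case: ifP => ?); lia.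
have [E2 O2] : rg_exec dR (Q L a.+1 (a + 2)) (enum (Q L a.+1 (a + 2) :\: Q L a.+1 (a.+1 + 2))) /\
    rg_out (Q L a.+1 (a + 2)) (enum (Q L a.+1 (a + 2) :\: Q L a.+1 (a.+1 + 2))) = Q L a.+1 (a.+1 + 2).
  case: (leqP (a + 2) L) => a2.
  + apply: (phase (c := (2 * a + 4)%:R)).
    - by apply: Qsub.
    - by apply/set0Pn; exists (Pp L 0 M); case: (bQ (a.+1 + 2) hp1).
    - apply: LBphase; first by move=> g _; apply: Qdel_ne; lia.
      by move=> g gF; apply: LB_sphase.
    - by apply: costUB; apply: UB_Q; intros; lia.
  + rewrite -(Qeq a.+1 (b := a + 2) (b' := a.+1 + 2)) //; last by lia.
    by rewrite setDv enum_set0.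
have [E3 O3] := IH a.+1 ltac:(lia).
split.
- apply: rg_cat => //; rewrite O1; apply: rg_cat => //; by rewrite O2.
- by rewrite !rg_out_cat O1 O2 O3.
Qed.

Definition Fin := Q L (L + 1) (L + 3).
Definition fullseq : seq T := enum ([set: T] :\: S1 L) ++ enum (S1 L :\: Q L 0 2) ++ tl (L + 1) 0.

Lemma two_pts (F : {set T}) g : Pp L 0 M \in F -> Pp L 0 M.-1 \in F -> F :\ g != set0.
Proof.
move=> h1 h2; apply/set0Pn.
case: (eqVneq g (Pp L 0 M)) => [e|ne].
  exists (Pp L 0 M.-1); rewrite in_setD1 h2 andbT e; apply/negP => /eqP.
  move/(congr1 (@ch L)); have [_ _ ->] := PpE (leq0n L) hM (leq0n M).
  have [_ _ ->] := PpE (leq0n L) hM1 (leq0n M.-1); rewrite /M; lia.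
by exists (Pp L 0 M); rewrite in_setD1 h1 andbT eq_sym.
Qed.

Lemma bS1 : Pp L 0 M \in S1 L /\ Pp L 0 M.-1 \in S1 L.
Proof.
have [b1 b2 b3] := PpE (leq0n L) hM (leq0n M).
have [c1 c2 c3] := PpE (leq0n L) hM1 (leq0n M.-1).
by rewrite !inE b1 c1.
Qed.

Lemma full_ok : rg_exec dR [set: T] fullseq /\ rg_out [set: T] fullseq = Fin.
Proof.
have hp0 : (0 <= M.-1)%N by [].
have [P1 O1] : rg_exec dR [set: T] (enum ([set: T] :\: S1 L)) /\
    rg_out [set: T] (enum ([set: T] :\: S1 L)) = S1 L.
  apply: (phase (c := 1%:R)).
  - exact: subsetT.
  - by apply/set0Pn; exists (Pp L 0 M); case: bS1.
  - apply: LBphase; first by move=> g _; case: bS1 => h1 h2; apply: two_pts; rewrite inE.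
    move=> g _; exists g => v _ ne; apply: sep1 => e; exact: ne (esym e).
  - apply: costUB => u; have [v ? ?] := UB_S1 u; by exists v.
have [P2 O2] : rg_exec dR (S1 L) (enum (S1 L :\: Q L 0 2)) /\
    rg_out (S1 L) (enum (S1 L :\: Q L 0 2)) = Q L 0 2.
  apply: (phase (c := 2%:R)).
  - by apply/subsetP => x; rewrite !inE => /andP [].
  - by apply/set0Pn; exists (Pp L 0 M); case: (bQ 2 hp0).
  - apply: LBphase; first by move=> g _; case: bS1 => h1 h2; apply: two_pts.
    move=> g; rewrite inE => hg; exists g => v; rewrite inE => hv ne; apply: sep2 => // e; exact: ne (esym e).
  - by apply: costUB; apply: UB_Q; intros; lia.
have [P3 O3] := tl_ok (n := L + 1) (a := 0) erefl.
split.
- apply: rg_cat => //; rewrite O1; apply: rg_cat => //; by rewrite O2.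
- by rewrite !rg_out_cat O1 O2 O3.
Qed.

Lemma card_Fin : #|Fin| = (L + 2)%N.
Proof.
pose f (i : 'I_(L + 2)) : T := Pp L 0 (L + 1 + i).
have hf i : [/\ isC (f i) = false, lv (f i) = 0%N & ch (f i) = (L + 1 + i)%N].
  apply: PpE => //; have := ltn_ord i; lia.
have finj : injective f.
  move=> i j e; apply: ord_inj; have := congr1 (@ch L) e.
  have [_ _ ->] := hf i; have [_ _ ->] := hf j; lia.
have -> : Fin = f @: [set: 'I_(L + 2)].
  apply/setP => x; apply/idP/imsetP.
  - rewrite inE => /andP [hx h]; have := lv_le x; have := ch_le x.
    move=> hc hl; have hx0 : lv x = 0%N by move: h; lia.
    have hch : (L + 1 <= ch x)%N by move: h; lia.
    have hi : (ch x - (L + 1) < L + 2)%N by lia.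
    exists (Ordinal hi) => //; have [e1 e2 e3] := hf (Ordinal hi).
    apply: ptE; rewrite ?e1 ?e2 ?e3 /= ?(negbTE hx) //; lia.
  - move=> [i _ ->]; have [e1 e2 e3] := hf i; rewrite inE e1 e2 e3 /=; lia.
by rewrite card_imset // cardsT card_ord.
Qed.

Lemma cost_Fin : cost dR Fin = (2 * L + 2)%:R.
Proof.
have hp : (L + 1 <= M.-1)%N by rewrite /M; lia.
apply/eqP; rewrite eq_le; apply/andP; split.
- by apply: costUB; apply: UB_Q; intros; lia.
- have hL : (L <= 2 * L + 2)%N by lia.
  apply: (costLB (u := Pp L L L)); first by apply/set0Pn; exists (Pp L 0 M); case: (bQ (L + 3) hp).
  move=> v; rewrite inE => /andP [hv h].
  have := LB_P (leqnn L) (leqnn L) hL hv; have := lv_le v; move: h; lia.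
Qed.

Definition Fopt : {set T} := [set x | isC x].

Lemma card_Fopt : (#|Fopt| <= L + 1)%N.
Proof.
pose g (x : T) : 'I_L.+1 := (val x).1.2.
have ginj : {in Fopt &, injective g}.
  move=> x y; rewrite !inE => hx hy e; apply: ptE.
  - by rewrite hx hy.
  - by rewrite /lv -/(g x) -/(g y) e.
  - by rewrite (okC hx) (okC hy).
rewrite -(card_in_imset ginj); apply: leq_trans (max_card _) _; by rewrite card_ord addn1.
Qed.

Lemma cost_Fopt : cost dR Fopt = 1.
Proof.
have [b1 b2 b3] := PpE (leq0n L) hM (leq0n M).
apply/eqP; rewrite eq_le; apply/andP; split.
- apply: (costUB (c := 1%N)) => u; case hu: (isC u).
    by exists u; rewrite ?inE ?dn_xx.
  have [c1 c2 c3] := CpE (lv_le u); exists (Cp L (lv u)); first by rewrite inE c1.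
  rewrite dn_sym; apply: dn_CP; by rewrite ?c1 ?c2 ?hu.
- apply: (costLB (c := 1%N) (u := Pp L 0 M)); first by apply/set0Pn; exists (Cp L 0); rewrite inE; case: (CpE (leq0n L)).
  move=> v; rewrite inE => hv; apply: sep1 => e; by rewrite -e b1 in hv.
Qed.

Lemma OPT_lb (F : {set T}) : F != set0 -> (#|F| <= L + 2)%N -> 1 <= cost dR F.
Proof.
move=> F0 Fk.
have [u uF] : exists u, u \notin F.
  case: (pickP (fun u => u \notin F)) => [u hu|none]; first by exists u.
  have FT : F = [set: T] by apply/setP => x; rewrite inE; have := none x; case: (x \in F).
  have : (#|Cp L 0 |: Fin| <= #|F|)%N by rewrite FT cardsT; apply: max_card.
  rewrite cardsU1 card_Fin; have [c1 _ _] := CpE (leq0n L).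
  by rewrite inE c1 /= => h; exfalso; have := leq_trans h Fk; lia.
apply: (costLB (c := 1%N) (u := u)) => // v vF; apply: sep1 => e; by rewrite e vF in uF.
Qed.

Lemma cardT_ge : (L + 2 <= #|T|)%N.
Proof. by rewrite -card_Fin; apply: max_card. Qed.

End Real.

Lemma part2 (R : realType) :
  (forall k : nat, (2 <= k)%N ->
      exists (T : finType) (d : T -> T -> R),
        [/\ is_metric d, (k <= #|T|)%N &
          exists s : seq T,
            [/\ rg_exec d [set: T] s, size s = (#|T| - k)%N &
              exists opt : R,
                [/\ is_OPT d k opt, 0 < opt &
                    cost d (rg_out [set: T] s) = (2 * k - 2)%:R * opt]]]).
Proof.
move=> k hk; have [L ->] : exists L, k = (L + 2)%N by exists (k - 2)%N; lia.
exists (TT L), (@dR R L); split.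
- exact: dR_metric.
- exact: cardT_ge.
- have [E O] := full_ok R L.
  exists (fullseq L); split => //.
  + have := card_run E; rewrite O card_Fin cardsT; lia.
  + exists 1; split => //.
    * split.
      - exists (Fopt L); last exact: cost_Fopt.
        apply/andP; split; first by apply/set0Pn; exists (Cp L 0); rewrite inE; case: (CpE (leq0n L)).
        by have := card_Fopt L; lia.
      - move=> F /andP [F0 Fk]; exact: OPT_lb.
    * by rewrite mulr1 O cost_Fin; congr (_%:R); lia.
Qed.

Theorem theorem1 (R : realType) :
  (* upper bound: every execution is a 2k-approximation *)
  (forall (T : finType) (d : T -> T -> R) (k : nat),
      is_metric d -> (1 <= k)%N -> (k <= #|T|)%N ->
      forall s : seq T,
        rg_exec d [set: T] s -> size s = (#|T| - k)%N ->
        forall opt : R, is_OPT d k opt ->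
          cost d (rg_out [set: T] s) <= (2 * k)%:R * opt) /\
  (* lower bound: some instance and execution achieve (2k-2) * OPT, OPT > 0 *)
  (forall k : nat, (2 <= k)%N ->
      exists (T : finType) (d : T -> T -> R),
        [/\ is_metric d, (k <= #|T|)%N &
          exists s : seq T,
            [/\ rg_exec d [set: T] s, size s = (#|T| - k)%N &
              exists opt : R,
                [/\ is_OPT d k opt, 0 < opt &
                    cost d (rg_out [set: T] s) = (2 * k - 2)%:R * opt]]]).
Proof.
split; [exact: part1 | exact: part2].
Qed.
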